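(* Assume the following setup. Let $a,x,u,v$ be integers with $3\le a\le x$, $0\le u\le a-3$, and $u+2\le v\le\min\left(a-1,\frac{a(x-1)}{x}\right)$. Let $\lambda$ consist of $ua+v$ parts equal to $x$ and $v-(u+1)$ parts equal to $ax$, and let $n=|\lambda|$, so that $n=x[(a+1)(v-1)+1]$ and $n-1=xa(v-1)+xv-1$. For $0\le i\le n-2$ write uniquely \[ i=\frac{n}{x}r_i+(v-1)p_i+q_i \] with integers $0\le r_i<x$, $0\le p_i<a+2$, $0\le q_i<v-1$, $0\le (v-1)p_i+q_i<n/x$ (so $p_i=a+1$ implies $q_i=0$). Define $s_{1,i}=ix-(n-1)\left\lfloor\frac{ix}{n-1}\right\rfloor$. Then for every $0\le i\le n-2$, \[ s_{1,i}=r_i+x\big[(v-1)p_i+q_i\big]. \] *)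

(* Defs.v *)
From mathcomp Require Import all_boot.

Definition lam (a x u v : nat) : seq nat :=
  nseq (u * a + v) x ++ nseq (v - u.+1) (a * x).

Definition lam_size (a x u v : nat) : nat := sumn (lam a x u v).

Definition s1 (n x i : nat) : nat := i * x - (n - 1) * ((i * x) %/ (n - 1)).

(* Main.v *)
Require Import Defs.
From mathcomp Require Import all_boot.
From mathcomp Require Import zify.

Lemma keyA x N r m : 0 < x -> 2 <= N -> m < N -> r < x -> N * r + m <= N * x - 2 -> r + x * m < x * N - 1.
Proof.
move=> x0 N2 hm hr hi.
have [hm1|hm1] := leqP m (N - 2).
  have : x * m <= x * (N - 2) by apply: leq_mul.
  have : x * 2 <= x * N by apply: leq_mul.
  rewrite mulnBr (mulnC x 2). lia.
have em : m = N - 1 by lia.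
have hr2 : r.+2 <= x.
  have : N * r.+1 < N * x by rewrite mulnS; lia.
  by rewrite ltn_pmul2l //; lia.
have : x <= x * N by rewrite leq_pmulr; lia.
rewrite em mulnBr muln1. lia.
Qed.
Lemma keyB x N r m : 0 < x * N -> (N * r + m) * x = r * (x * N - 1) + (r + x * m).
Proof. move=> h. rewrite mulnBr muln1. have : r <= r * (x * N) by rewrite leq_pmulr. nia. Qed.

Lemma keyC a x u t : u <= t -> a * x * u <= a * x * t ->
 x * (u * a + t + 1) + (a * x * t - a * x * u) = x * ((a + 1) * t + 1).
Proof. move=> h1 h2. nia. Qed.

Theorem lemma4p5 (a x u v : nat) :
  3 <= a -> a <= x -> u <= a - 3 -> u + 2 <= v -> v <= a - 1 ->
  v * x <= a * (x - 1) ->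
  let n := lam_size a x u v in
  forall i : nat, i <= n - 2 ->
    (exists r p q : nat,
       [/\ i = (n %/ x) * r + (v - 1) * p + q,
           r < x, p < a + 2, q < v - 1 & (v - 1) * p + q < n %/ x]) /\
    (forall r p q : nat,
       i = (n %/ x) * r + (v - 1) * p + q ->
       r < x -> p < a + 2 -> q < v - 1 -> (v - 1) * p + q < n %/ x ->
       s1 n x i = r + x * ((v - 1) * p + q)).
Proof.
move=> ha hax hu huv hva hvx n i hi.
have x0 : 0 < x by lia.
have hw : 0 < v - 1 by lia.
set w := v - 1 in hw *.
set N := (a + 1) * w + 1.
have hn : n = x * N.
  rewrite /n /lam_size /lam sumn_cat !sumn_nseq /N /w.
  have -> : v - u.+1 = v - 1 - u by lia.
  have -> : v = (v - 1) + 1 by lia.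
  have -> : v - 1 + 1 - 1 = v - 1 by lia.
  set t := v - 1.
  have -> : u * a + (t + 1) = u * a + t + 1 by lia.
  have -> : a * x * (t - u) = a * x * t - a * x * u.
    by rewrite mulnBr.
  apply: keyC; first lia.
  by apply: leq_mul => //; lia.
have hN : n %/ x = N by rewrite hn mulKn.
rewrite hN.
have N0 : 0 < N by lia.
have hiN : i < N * x by rewrite mulnC -hn; lia.
split.
  exists (i %/ N), ((i %% N) %/ w), ((i %% N) %% w).
  have e1 := divn_eq i N.
  have e2 := divn_eq (i %% N) w.
  have m1 : i %% N < N by rewrite ltn_pmod.
  have m2 : (i %% N) %% w < w by rewrite ltn_pmod.
  split.
  - lia.
  - by rewrite ltn_divLR // mulnC.
  - have : (i %% N) %/ w <= ((a + 1) * w) %/ w.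
      by apply: leq_div2r; rewrite /N in m1; lia.
    rewrite mulnK //; lia.
  - done.
  - lia.
move=> r p q ei hr hp hq hm.
set m := w * p + q in ei hm *.
have N2 : 2 <= N by rewrite /N; lia.
have key : r + x * m < n - 1.
  rewrite hn; apply: keyA => //; move: hi; rewrite hn ei; lia.
have eix : i * x = r * (n - 1) + (r + x * m).
  rewrite ei -addnA -/m hn; apply: keyB; lia.
rewrite /s1 eix divnMDl; last lia.
rewrite (divn_small key) addn0.
lia.
Qed.
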